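(* Let $\mathcal{T}$ be a tower with $\mathbb{K}_0=\emptyset$ whose maps are elementary inclusions or elementary contractions, of dimension $\Delta$, with $n$ elementary inclusions, and let $\mathcal{W}$ be its contracting forest. If $N$ is an independent set of nodes of $\mathcal{W}$, then $\sum_{x\in N}|E(x)|\le(\Delta+1)\cdot n$.
   Context: Elementary inclusion: $\mathbb{K}_{i+1}=\mathbb{K}_i\cup\{\sigma\}$; elementary contraction of distinct vertices $u,v$: one of them disappears, both are mapped to the other, identity elsewhere. Dimension of the tower = maximal simplex dimension. Contracting forest: $\mathcal{W}_0=\emptyset$; if $\phi_{j-1}$ includes a simplex of dimension $>0$, $\mathcal{W}_j=\mathcal{W}_{j-1}$; if it includes a vertex $w$, $\mathcal{W}_j$ is $\mathcal{W}_{j-1}$ plus a new single-node tree labeled $w$; if it contracts $u$ and $v$, the two trees of $\mathcal{W}_{j-1}$ whose roots are labeled $u$ and $v$ are merged by making their roots the two children of a new root labeled with the image vertex. (The roots of $\mathcal{W}_j$ correspond bijectively to the vertices of $\mathbb{K}_j$.) $\mathcal{W}=\mathcal{W}_m$. Let $\Sigma$ be the collection of the $n$ simplices added at elementary inclusions; for $\sigma\in\Sigma$ added by $\phi_i$, each vertex of $\sigma$ is the label of a root of $\mathcal{W}_{i+1}$, hence corresponds to a node of $\mathcal{W}$. For a node $x$, $E(x)\subseteq\Sigma$ is the set of those $\sigma$ having at least one vertex whose corresponding node lies in the subtree of $\mathcal{W}$ rooted at $x$. A set of nodes is independent if no node in it is a proper ancestor of another. *)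

(* Defs.v *)
From HB Require Import structures.
From mathcomp Require Import all_boot.
From mathcomp Require Import finmap.
Set Implicit Arguments. Unset Strict Implicit. Unset Printing Implicit Defensive.
Local Open Scope fset_scope.

(* Vertices are natural numbers; a simplex is a nonempty finite set of
   vertices; a complex is a finite set of simplices. *)
Definition simplex := {fset nat}.
Definition complex := {fset {fset nat}}.

(* Elementary maps of a tower.
   - Incl s    : elementary inclusion K_{i+1} = K_i ∪ {s}.
   - Contr u v : elementary contraction of the distinct vertices u and v,
                 u disappears, both u and v are mapped to v (identity elsewhere).
                 (Contracting "v into u" is Contr v u.) *)
Inductive op := Incl of simplex | Contr of nat & nat.

Definition cmap (u v : nat) (x : nat) : nat := if x == u then v else x.

Definition step (K : complex) (o : op) : complex :=
  match o with
  | Incl s => s |` K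
  | Contr u v => [fset [fset cmap u v x | x in s] | s : {fset nat} in K]
  end.

Definition cplx (T : seq op) (i : nat) : complex := foldl step fset0 (take i T).

Definition nth_op (T : seq op) (i : nat) : op := nth (Incl fset0) T i.

(* Validity of each elementary map (K_{i+1} is again a simplicial complex and
   the map is genuinely elementary). *)
Definition valid_step (K : complex) (o : op) : Prop :=
  match o with
  | Incl s => [/\ s != fset0, s \notin K &
                  forall t : {fset nat}, t != fset0 -> t `<` s -> t \in K]
  | Contr u v => [/\ u != v, [fset u] \in K & [fset v] \in K]
  end.

Definition tower (T : seq op) : Prop :=
  forall i, i < size T -> valid_step (cplx T i) (nth_op T i).

Definition tower_dim (T : seq op) : nat :=
  \max_(i < (size T).+1) \max_(s <- cplx T i) (#|` s|).-1.

Definition isIncl (o : op) : bool := if o is Incl _ then true else false.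

(* ---- contracting forest ----
   Nodes of W are identified with the indices j of the maps phi_j that create
   them: a vertex inclusion creates a leaf, a contraction creates an internal
   node.  [creates T j w]: phi_j creates a node labeled w. *)
Definition creates (T : seq op) (j w : nat) : bool :=
  (j < size T) &&
  match nth_op T j with
  | Incl s => s == [fset w]
  | Contr _ v => v == w
  end.

Definition isNode (T : seq op) (j : nat) : bool :=
  (j < size T) &&
  match nth_op T j with
  | Incl s => #|` s| == 1
  | Contr _ _ => true
  end.

(* The root of W_j labeled w: the most recently created node (before j)
   carrying the label w. *)
Fixpoint rootAt (T : seq op) (j w : nat) : option nat :=
  match j with
  | 0 => None
  | j'.+1 => if creates T j' w then Some j' else rootAt T j' w
  end.

(* c is a child of p in W *)
Definition parent (T : seq op) (c p : nat) : bool :=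
  (p < size T) &&
  match nth_op T p with
  | Contr u v => (rootAt T p u == Some c) || (rootAt T p v == Some c)
  | Incl _ => false
  end.

Fixpoint in_sub_fuel (k : nat) (T : seq op) (x y : nat) : bool :=
  (y == x) ||
  (if k is k'.+1 then
     has (fun p => parent T y p && in_sub_fuel k' T x p) (iota 0 (size T))
   else false).

(* y lies in the subtree of W rooted at x.  Parents have strictly larger
   indices (< size T), so size T steps suffice. *)
Definition in_subtree (T : seq op) (x y : nat) : bool :=
  in_sub_fuel (size T) T x y.

(* sigma added by phi_i is in E(x): some vertex of sigma has its
   corresponding node (root of W_{i+1} with that label) in the subtree of x. *)
Definition inE (T : seq op) (x i : nat) : bool :=
  (i < size T) &&
  match nth_op T i with
  | Incl s => has (fun v => if rootAt T i.+1 v is Some y then in_subtree T x y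
                            else false) s
  | Contr _ _ => false
  end.

(* |E(x)|, the simplices of Sigma being indexed by their inclusion step *)
Definition E_size (T : seq op) (x : nat) : nat := count (inE T x) (iota 0 (size T)).

Definition independent (T : seq op) (N : seq nat) : Prop :=
  [/\ all (isNode T) N, uniq N &
      forall x y, x \in N -> y \in N -> x != y -> ~~ in_subtree T x y].

(* Main.v *)
Require Import Defs.
From HB Require Import structures.
From mathcomp Require Import all_boot.
From mathcomp Require Import finmap.
Set Implicit Arguments. Unset Strict Implicit.
Local Open Scope fset_scope.

Lemma rootAt_lt T j w c : rootAt T j w = Some c -> c < j /\ creates T c w.
Proof.
elim: j => [|j IH] //=.
case: ifP => [Hc [<-]|_ /IH [H1 H2]]; first by split.
by split => //; apply: ltnW.
Qed.

Lemma creates_fun T c a b : creates T c a -> creates T c b -> a = b.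
Proof.
rewrite /creates; case/andP=> _; case: (nth_op T c) => [s|u v] /=.
- move=> /eqP -> /andP [_ /eqP /fsetP H]; have := H a; rewrite !in_fset1 eqxx => /esym.
  by move/eqP.
- by move=> /eqP -> /andP [_ /eqP].
Qed.

Lemma cplxS T j : j < size T -> cplx T j.+1 = step (cplx T j) (nth_op T j).
Proof. by move=> Hj; rewrite /cplx (take_nth (Incl fset0) Hj) -cats1 foldl_cat. Qed.

Definition Inv T j := forall w, [fset w] \in cplx T j ->
  exists c, rootAt T j w = Some c /\ forall p, c < p < j -> ~~ parent T c p.

Lemma inv_all T j : tower T -> j <= size T -> Inv T j.
Proof.
move=> HT; elim: j => [|j IH] Hj.
  by move=> w; rewrite /cplx take0 /=.
have Hj' : j < size T by [].
have IHj := IH (ltnW Hj).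
have Hv := HT j Hj'.
move=> w; rewrite cplxS //.
have Hpj : forall c, c < j -> (forall p, c < p < j -> ~~ parent T c p) ->
   ~~ parent T c j -> forall p, c < p < j.+1 -> ~~ parent T c p.
  move=> c _ H1 H2 p /andP [Hcp]; rewrite ltnS leq_eqVlt => /orP [/eqP -> //|Hpj].
  by apply: H1; rewrite Hcp.
rewrite /=.
case Hn: (nth_op T j) Hv => [s|u v] /=.
- move=> [Hs0 HsK Hsub].
  rewrite in_fset1U => /orP [/eqP Hs| Hw].
  + exists j; rewrite /creates Hj' Hn Hs eqxx; split => //.
    by move=> p /andP [H1 H2]; rewrite ltnS leqNgt H1 in H2.
  + case Hcr: (creates T j w).
    * exists j; split => //.
      by move=> p /andP [H1 H2]; rewrite ltnS leqNgt H1 in H2.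
    * have [c [Hr Hnp]] := IHj w Hw.
      exists c; rewrite Hr; split => //.
      have [Hcj _] := rootAt_lt Hr.
      apply: Hpj => //.
      by rewrite /parent Hj' Hn.
- move=> [Huv Hu Hv].
  move=> /imfsetP [s /= Hs Heq].
  have Hw : w \in [fset cmap u v x | x in s] by rewrite -Heq in_fset1.
  case/imfsetP: Hw => x /= Hx Hxw.
  have Hwu : w != u.
    rewrite Hxw /cmap; case: ifP => [_|/negbT //].
    by rewrite eq_sym.
  case Hwv: (w == v).
  + exists j; rewrite /creates Hj' Hn eq_sym Hwv; split => //.
    by move=> p /andP [H1 H2]; rewrite ltnS leqNgt H1 in H2.
  + have Hsw : s = [fset w].
      apply/fsetP => y; rewrite in_fset1; apply/idP/idP.
      * move=> Hy.
        have : cmap u v y \in [fset w] by rewrite Heq; apply/imfsetP; exists y.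
        rewrite in_fset1 /cmap; case: ifP => [_ /eqP Hvw|_ //].
        by rewrite Hvw eqxx in Hwv.
      * move/eqP ->.
        move: Hxw; rewrite /cmap; case: ifP => [_ Hvw|_ -> //].
        by rewrite Hvw eqxx in Hwv.
    have [c [Hr Hnp]] : exists c, rootAt T j w = Some c /\ (forall p, c < p < j -> ~~ parent T c p) by apply: IHj; rewrite -Hsw.
    have Hcr : creates T j w = false by rewrite /creates Hj' Hn eq_sym Hwv.
    exists c; rewrite /= Hcr Hr; split => //.
    have [Hcj Hcc] := rootAt_lt Hr.
    apply: Hpj => //.
    rewrite /parent Hj' Hn; apply/negP => /orP [] /eqP Hr'.
    * have [_ Hcu] := rootAt_lt Hr'.
      by have := creates_fun Hcc Hcu => /eqP; rewrite (negbTE Hwu).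
    * have [_ Hcu] := rootAt_lt Hr'.
      by have := creates_fun Hcc Hcu => /eqP; rewrite Hwv.
Qed.

Lemma parent_lt T c p : parent T c p -> c < p.
Proof.
rewrite /parent; case/andP => _; case: (nth_op T p) => // u v.
by case/orP => /eqP /rootAt_lt [].
Qed.

Lemma parent_uniq T c p1 p2 : tower T -> parent T c p1 -> parent T c p2 -> p1 = p2.
Proof.
move=> HT.
wlog: p1 p2 / p1 <= p2.
  move=> H H1 H2; case: (leqP p1 p2) => Hle; first exact: H.
  by apply/esym/H => //; apply: ltnW.
rewrite leq_eqVlt => /orP [/eqP // | Hlt] H1 H2.
have Hc1 := parent_lt H1.
move: H2; rewrite /parent => /andP [Hp2].
have := HT p2 Hp2.
case: (nth_op T p2) => // u v [_ Hu Hv] /orP [] /eqP Hr.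
- have [c' [Hr' Hnp]] := inv_all HT (ltnW Hp2) Hu.
  rewrite Hr in Hr'; case: Hr' => <- in Hnp.
  by have := Hnp p1; rewrite Hc1 Hlt H1 => /(_ isT).
- have [c' [Hr' Hnp]] := inv_all HT (ltnW Hp2) Hv.
  rewrite Hr in Hr'; case: Hr' => <- in Hnp.
  by have := Hnp p1; rewrite Hc1 Hlt H1 => /(_ isT).
Qed.

Lemma fuel_mono T k x y : in_sub_fuel k T x y -> in_sub_fuel k.+1 T x y.
Proof.
elim: k y => [|k IH] y /=.
  by rewrite orbF => ->.
case/orP => [-> //| /hasP [p Hp /andP [Hpar Hs]]].
apply/orP; right; apply/hasP; exists p => //; rewrite Hpar; exact: IH.
Qed.

Lemma fuel_mono_le T k k' x y : k <= k' -> in_sub_fuel k T x y -> in_sub_fuel k' T x y.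
Proof.
move=> /subnKC <-; elim: (k' - k) => [|d IH]; first by rewrite addn0.
by move=> H; rewrite addnS; apply: fuel_mono; apply: IH.
Qed.

Lemma chain T k k' x x' y : tower T ->
  in_sub_fuel k T x y -> in_sub_fuel k' T x' y ->
  in_sub_fuel k' T x' x || in_sub_fuel k T x x'.
Proof.
move=> HT; elim: k k' y => [|k IH] k' y.
  by rewrite /= orbF => /eqP ->  ->.
move=> /= /orP [/eqP -> -> //|/hasP [p Hp /andP [Hpar Hs]]].
case: k' => [|k'].
  rewrite /= orbF => /eqP Hyx'; apply/orP; right; rewrite -Hyx' /=.
  by apply/orP; right; apply/hasP; exists p => //; rewrite Hpar Hs.
move=> /= /orP [/eqP Hyx'|/hasP [p' Hp' /andP [Hpar' Hs']]].
  apply/orP; right; apply/orP; right; apply/hasP; exists p => //.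
  by rewrite -Hyx' Hpar.
have Epp := parent_uniq HT Hpar Hpar'; subst p'.
case/orP: (IH k' p Hs Hs') => H.
- by apply/orP; left; apply: fuel_mono.
- by apply/orP; right; apply: fuel_mono.
Qed.

Lemma count_le1 (P : pred nat) N : uniq N ->
  (forall x y, x \in N -> y \in N -> x != y -> ~~ (P x && P y)) -> count P N <= 1.
Proof.
elim: N => [|a N IH] //= /andP [HaN HuN] H.
have IH' : count P N <= 1.
  apply: IH => // x y Hx Hy; apply: H; rewrite in_cons ?Hx ?Hy orbT //.
case HPa: (P a) => //=.
rewrite add1n ltnS leqn0 -[_ == 0]negbK -lt0n -has_count.
apply/hasP => [[y Hy HPy]].
have Hay : a != y by apply/eqP => E; rewrite E Hy in HaN.
by have := H a y (mem_head _ _) (mem_behead (s:=a::N) Hy) Hay; rewrite HPa HPy.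
Qed.

Lemma count_has (A : seq nat) (Q : nat -> nat -> bool) (N : seq nat) :
  count (fun x => has (Q x) A) N <= \sum_(v <- A) count (fun x => Q x v) N.
Proof.
elim: A => [|v A IH] /=.
  by rewrite big_nil; elim: N.
rewrite big_cons.
apply: leq_trans _ (leq_add (leqnn _) IH).
rewrite -(count_predUI (fun x => Q x v) (fun x => has (Q x) A)).
apply: leq_trans (leq_addr _ _).
by apply: eq_leq; apply: eq_count.
Qed.

Lemma count_sum (a : pred nat) r : count a r = \sum_(i <- r) a i.
Proof. by elim: r => [|x r IH] /=; rewrite ?big_nil ?big_cons ?IH. Qed.

Lemma dim_bound T i s : i < size T -> nth_op T i = Incl s -> #|` s| <= (tower_dim T).+1.
Proof.
move=> Hi Hn.
have Hs : s \in cplx T i.+1 by rewrite cplxS // Hn /= in_fset1U eqxx.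
apply: leq_trans (leqSpred _) _; rewrite ltnS.
rewrite /tower_dim.
have Hi' : i.+1 < (size T).+1 by [].
apply: leq_trans _ (leq_bigmax_cond (F := fun j : 'I_(size T).+1 => \max_(s <- cplx T j) (#|` s|).-1) (Ordinal Hi') isT).
by rewrite /=; apply: (leq_bigmax_seq (F := fun s : {fset nat} => (#|` s|).-1)).
Qed.

Theorem lemma7 (T : seq op) (Delta n : nat) (N : seq nat) :
  tower T ->
  Delta = tower_dim T ->
  n = count isIncl T ->
  independent T N ->
  \sum_(x <- N) E_size T x <= Delta.+1 * n.
Proof.
move=> HT -> -> [HN Hu Hind].
rewrite /E_size.
under eq_bigr => x _ do rewrite count_sum.
rewrite exchange_big /=.
have -> : count isIncl T = \sum_(i <- iota 0 (size T)) isIncl (nth_op T i).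
  by rewrite -count_sum -{1}(mkseq_nth (Incl fset0) T) /mkseq count_map.
rewrite mulnC big_distrl /=.
apply: leq_sum => i _.
rewrite -(count_sum (fun x => Defs.inE T x i)).
case Hi: (i < size T); last first.
  by rewrite (@eq_count _ _ pred0) ?count_pred0 // => x; rewrite /Defs.inE Hi.
case Hn: (nth_op T i) => [s|u v] /=; last first.
  by rewrite (@eq_count _ _ pred0) ?count_pred0 // => x; rewrite /Defs.inE Hi Hn.
rewrite mul1n.
apply: leq_trans (dim_bound Hi Hn).
rewrite (@eq_count _ _ (fun x => has (fun v => if rootAt T i.+1 v is Some y then in_subtree T x y else false) s)); last first.
  by move=> x; rewrite /Defs.inE Hi Hn.
apply: leq_trans (count_has _ _ _) _.
rewrite -sum1_size; apply: leq_sum => v _.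
apply: count_le1 => // x y Hx Hy Hxy.
case: (rootAt T i.+1 v) => [z|] //.
apply/negP => /andP [H1 H2].
case/orP: (chain HT H1 H2) => H.
- by move: (Hind y x Hy Hx); rewrite eq_sym Hxy /in_subtree H => /(_ isT).
- by move: (Hind x y Hx Hy); rewrite Hxy /in_subtree H => /(_ isT).
Qed.
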